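(* The number of active faces without pre-image in the tower $(\mathcal{X}_{\alpha_s})_{s\ge0}$ is at most $n3^d$; that is, the number of active faces of $\square_{\alpha_0}$ plus, summed over all $s\ge0$, the number of active faces of $\square_{\alpha_{s+1}}$ that are not of the form $g_{\alpha_s}(f)$ for an active face $f$ of $\square_{\alpha_s}$, is at most $n3^d$.
   Context: Let $P\subset\mathbb{R}^d$ with $n=|P|$, and let $CP(P)$ be the closest-pair (Euclidean) distance of $P$. Scales $\alpha_s=\lambda2^s$ with $\lambda=CP(P)/(3d)$. Grids $G_{\alpha_s}\subset\mathbb{R}^d$: $G_{\alpha_0}=\lambda\mathbb{Z}^d$ and $G_{\alpha_{s+1}}=2(G_{\alpha_s}-O_s)+O_s+\frac{\alpha_s}{2}\varepsilon_s$ with $O_s\in G_{\alpha_s}$, $\varepsilon_s\in\{-1,1\}^d$. $\square_{\alpha_s}$: cubical complex of faces $\prod_j[x_j,x_j+m_j]$, $x\in G_{\alpha_s}$, $m_j\in\{0,\alpha_s\}$. $a_{\alpha_s}(p)$: the point of $G_{\alpha_s}$ whose Voronoi cell (closed cube of side $\alpha_s$ centered at it) contains $p$, assumed unique; active vertices $V_{\alpha_s}=a_{\alpha_s}(P)$. A face $f$ is spanned by $V$ if $f\cap V\ne\emptyset$ and $f\cap V$ lies in no facet of $f$; active faces are those spanned by $V_{\alpha_s}$. $g_{\alpha_s}$ maps $x\in G_{\alpha_s}$ to the unique $y\in G_{\alpha_{s+1}}$ whose Voronoi cell contains $x$, and a face to the convex hull of the images of its vertices (which maps active faces to active faces). $\mathcal{X}_{\alpha_s}$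 is the union over maximal active faces $f$ of the barycentric subdivisions of $f$, connected by the simplicial maps induced by $g$. *)

(* Defs.v *)
From HB Require Import structures.
From mathcomp Require Import all_boot all_order all_algebra.
From mathcomp Require Import classical_sets boolp reals.
Set Implicit Arguments. Unset Strict Implicit. Unset Printing Implicit Defensive.
Import Order.TTheory GRing.Theory Num.Theory.
Local Open Scope classical_set_scope.
Local Open Scope ring_scope.

Section Tower.
Variables (R : realType) (d : nat).
Notation pt := 'rV[R]_d.

Definition edist (p q : pt) : R := Num.sqrt (\sum_(j < d) (p 0 j - q 0 j) ^+ 2).

Definition is_CP (P : seq pt) (c : R) : Prop :=
  (exists p q, [/\ p \in P, q \in P, p != q & edist p q = c]) /\
  (forall p q, p \in P -> q \in P -> p != q -> c <= edist p q).

Definition conv (S : set pt) : set pt :=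
  [set z : pt | exists (k : nat) (w : 'I_k -> R) (y : 'I_k -> pt),
     [/\ forall i, 0 <= w i, \sum_(i < k) w i = 1, forall i, S (y i)
       & z = \sum_(i < k) w i *: y i]].

(* closed cube of side a centered at y (Voronoi cell of a grid point) *)
Definition cell (a : R) (y : pt) : set pt :=
  [set p : pt | forall j, `|p 0 j - y 0 j| <= a / 2].

(* the face prod_j [x_j, x_j + m_j * a] as a subset of R^d *)
Definition box (a : R) (x : pt) (m : {ffun 'I_d -> bool}) : set pt :=
  [set v : pt | forall j, if m j then x 0 j <= v 0 j <= x 0 j + a else v 0 j == x 0 j].

Definition box_vertex (a : R) (x : pt) (m : {ffun 'I_d -> bool}) : set pt :=
  [set v : pt | forall j, v 0 j = x 0 j \/ (m j /\ v 0 j = x 0 j + a)].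

Definition face_dim (m : {ffun 'I_d -> bool}) : nat := #|[pred j | m j]|.

Variables (P : seq pt) (lam : R) (O : nat -> pt) (eps : nat -> pt).

Definition alpha (s : nat) : R := lam * 2 ^+ s.

Fixpoint grid (s : nat) : set pt :=
  match s with
  | 0 => [set x | exists z : 'I_d -> int, x = \row_j (lam * (z j)%:~R)]
  | s'.+1 => [set (2 : R) *: (y - O s') + O s' + (alpha s' / 2) *: eps s'
             | y in grid s']
  end.

Definition vor (s : nat) (y : pt) : set pt := cell (alpha s) y.

Definition active_vtx (s : nat) (y : pt) : Prop :=
  grid s y /\ exists2 p, p \in P & vor s y p.

Definition face (s : nat) x m := box (alpha s) x m.

Definition is_facet (s : nat) (x' : pt) (m' : {ffun 'I_d -> bool})
    (x : pt) (m : {ffun 'I_d -> bool}) : Prop :=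
  [/\ grid s x', face s x' m' `<=` face s x m & (face_dim m').+1 = face_dim m].

Definition spanned (s : nat) (x : pt) (m : {ffun 'I_d -> bool}) : Prop :=
  (exists y, active_vtx s y /\ face s x m y) /\
  (forall x' m', is_facet s x' m' x m ->
     ~ (forall y, active_vtx s y -> face s x m y -> face s x' m' y)).

Definition active (s : nat) (x : pt) (m : {ffun 'I_d -> bool}) : Prop :=
  grid s x /\ spanned s x m.

(* g_{alpha_s} on points, as a relation: y is the point of G_{alpha_{s+1}}
   whose Voronoi cell contains x *)
Definition gpt (s : nat) (x y : pt) : Prop := grid s.+1 y /\ vor s.+1 y x.

Definition gface (s : nat) (x : pt) (m : {ffun 'I_d -> bool}) : set pt :=
  conv [set y | exists v, box_vertex (alpha s) x m v /\ gpt s v y].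

Definition no_preimage (s : nat) (x : pt) (m : {ffun 'I_d -> bool}) : Prop :=
  match s with
  | 0 => active 0 x m
  | s'.+1 => active s x m /\
      ~ (exists x0 m0, active s' x0 m0 /\ face s x m = gface s' x0 m0)
  end.

End Tower.

(* Main.v *)
Require Import Defs.
From HB Require Import structures.
From mathcomp Require Import all_boot all_order all_algebra.
From mathcomp Require Import classical_sets boolp reals.
From mathcomp Require Import zify ring lra.
Set Implicit Arguments. Unset Strict Implicit. Unset Printing Implicit Defensive.
Import Order.TTheory GRing.Theory Num.Theory.
Local Open Scope classical_set_scope.
Local Open Scope ring_scope.


Lemma count_lt (T : eqType) (a b : pred T) (s : seq T) (x : T) :
  (forall r, a r -> b r) -> x \in s -> b x -> ~~ a x -> (count a s < count b s)%N.
Proof.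
move=> ab; elim: s => [//|y s IH]; rewrite inE => /orP[/eqP <-|xin] bx nax /=.
  rewrite bx (negbTE nax) add0n add1n ltnS; exact: sub_count.
have := IH xin bx nax; case ay: (a y); first by rewrite (ab _ ay).
by case: (b y) => /=; lia.
Qed.

Lemma divz_lo (z hh yy : int) : 2*yy - hh <= z <= 2*yy - hh + 1 -> ((z + hh) %/ 2)%Z = yy.
Proof. lia. Qed.
Lemma divz_hi (z hh yy : int) : 2*yy - hh + 2 <= z <= 2*yy - hh + 3 -> ((z + hh) %/ 2)%Z = yy + 1.
Proof. lia. Qed.
Lemma divz_inv (z hh yy : int) : ((z + hh) %/ 2)%Z = yy -> 2*yy - hh <= z <= 2*yy - hh + 1.
Proof. lia. Qed.

Lemma fib_or (z hh yy : int) : 2*yy - hh <= z <= 2*yy - hh + 3 ->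
  (((z + hh) %/ 2)%Z == yy) || (((z + hh) %/ 2)%Z == yy + 1).
Proof. by move=> H; apply/orP; case: (lerP z (2*yy - hh + 1)) => Hc; [left|right]; apply/eqP; lia. Qed.
Lemma step_arith (zp zq aa : int) (b : bool) : aa <= zp <= aa + 3 -> b = (zp <= aa + 1) ->
  (if b then is_true (zp <= zq <= zp + 1) else is_true (zp - 1 <= zq <= zp)) -> aa <= zq <= aa + 3.
Proof. by case: b => H1 H2 H3; lia. Qed.
Lemma no_succ_le (x : int) : (x + 1 <= x) = false. Proof. lia. Qed.
Lemma no_pred_ge (x : int) : (x <= x + -1) = false. Proof. lia. Qed.
Lemma L01a (x : int) : 0 <= x - x <= 1. Proof. lia. Qed.
Lemma L01b (x : int) : 0 <= x + 1 - x <= 1. Proof. lia. Qed.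
Lemma L10a (x : int) : -1 <= x - 1 - x <= 0. Proof. lia. Qed.
Lemma L10b (x : int) : -1 <= x - 1 + 1 - x <= 0. Proof. lia. Qed.
Lemma conv01 (u v : int) : 0 <= v - u <= 1 -> u <= v <= u + 1. Proof. lia. Qed.
Lemma conv10 (u v : int) : -1 <= v - u <= 0 -> u - 1 <= v <= u. Proof. lia. Qed.
Lemma ev_arith (x aa : int) : aa <= x <= aa + 1 -> x != aa -> x = aa + 1. Proof. move=> ? /eqP; lia. Qed.
Lemma valk_arith (x aa : int) (b : bool) : b = (x <= aa + 1) ->
  (x == aa + 1) || (x == aa + 2) -> x = if b then aa + 1 else aa + 2.
Proof. by move=> -> /orP [] /eqP ->; case: ifP; lia. Qed.
Lemma twoE (x : int) : x + 2 = x + 1 + 1. Proof. by rewrite -addrA. Qed.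
Lemma div_a0 (yy hh : int) : ((2 * yy - hh + hh) %/ 2)%Z = yy. Proof. lia. Qed.
Lemma div_a1 (yy hh : int) : ((2 * yy - hh + 1 + hh) %/ 2)%Z = yy. Proof. lia. Qed.
Lemma div_a2 (yy hh : int) : ((2 * yy - hh + 1 + 1 + hh) %/ 2)%Z = yy + 1. Proof. lia. Qed.

Section Core.
Variables (d : nat) (T : eqType) (P : seq T).
Variable A : nat -> T -> 'I_d -> int.
Variable h : nat -> 'I_d -> int.
Definition gz t j (z : int) : int := ((z + h t j) %/ 2)%Z.
Hypothesis Astep : forall t p j, p \in P -> A t.+1 p j = gz t j (A t p j).

Definition inF (x : 'I_d -> int) (m : {ffun 'I_d -> bool}) (z : 'I_d -> int) : bool :=
  [forall j, (z j == x j) || (m j && (z j == x j + 1))].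
Definition Active t x m :=
  (exists2 p, p \in P & inF x m (A t p)) /\
  forall k, m k -> (exists2 p, p \in P & inF x m (A t p) /\ A t p k = x k) /\
                   (exists2 p, p \in P & inF x m (A t p) /\ A t p k = x k + 1).
Definition ImgRel t (x0 : 'I_d -> int) (m0 : {ffun 'I_d -> bool}) (y : 'I_d -> int)
   (M : {ffun 'I_d -> bool}) :=
  forall j, (M j -> m0 j /\ gz t j (x0 j) = y j /\ gz t j (x0 j + 1) = y j + 1) /\
            (~~ M j -> gz t j (x0 j) = y j /\ (m0 j -> gz t j (x0 j + 1) = y j)).
Definition Fx t p (M : {ffun 'I_d -> bool}) (up : 'I_d -> bool) : 'I_d -> int :=
  fun j => if M j && ~~ up j then A t p j - 1 else A t p j.

Lemma inFP x (m : {ffun 'I_d -> bool}) z : reflect (forall j, z j = x j \/ (m j /\ z j = x j + 1)) (inF x m z).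
Proof.
apply: (iffP forallP) => H j; have := H j.
  by case/orP => [/eqP->|/andP[-> /eqP->]]; [left|right].
by case=> [->|[-> ->]]; rewrite eqxx ?orbT.
Qed.

Lemma Aprop01 t n p q j : p \in P -> q \in P ->
  0 <= A t q j - A t p j <= 1 -> 0 <= A (n + t) q j - A (n + t) p j <= 1.
Proof.
move=> pP qP H; elim: n => [//|n IH]; rewrite addSn !Astep //; move: IH; rewrite /gz; lia.
Qed.

Lemma Aprop10 t n p q j : p \in P -> q \in P ->
  -1 <= A t q j - A t p j <= 0 -> -1 <= A (n + t) q j - A (n + t) p j <= 0.
Proof.
move=> pP qP H; elim: n => [//|n IH]; rewrite addSn !Astep //; move: IH; rewrite /gz; lia.
Qed.

Lemma Aprop0 t n p q j : p \in P -> q \in P ->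
  A t q j = A t p j -> A (n + t) q j = A (n + t) p j.
Proof. by move=> pP qP H; elim: n => [//|n IH]; rewrite addSn !Astep // IH. Qed.

Lemma Amono n p q j : p \in P -> q \in P -> A 0 q j <= A 0 p j -> A n q j <= A n p j.
Proof.
move=> pP qP H; elim: n => [//|n IH]; rewrite !Astep //; move: IH; rewrite /gz; lia.
Qed.

Section Fixed.
Variables (s : nat) (y : 'I_d -> int) (M : {ffun 'I_d -> bool}).
Definition a k := 2 * y k - h s k.
Definition inS p := (p \in P) && inF y M (A s.+1 p).
Definition up p k := A s.+1 p k == y k.
Definition inner p k := (A s p k == a k + 1) || (A s p k == a k + 2).
Definition allin p := [forall l, M l ==> inner p l].
Definition Bad p := exists t, (t <= s)%N /\ Active t (Fx t p M (up p)) M.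

Lemma inS_range p k : inS p ->
  (M k -> a k <= A s p k <= a k + 3 /\ (up p k = (A s p k <= a k + 1))) /\
  (~~ M k -> a k <= A s p k <= a k + 1).
Proof.
case/andP=> pP /inFP /(_ k); rewrite /up Astep // /a /gz => H.
split=> Mk.
  have H' : (((A s p k + h s k) %/ 2)%Z = y k \/ ((A s p k + h s k) %/ 2)%Z = y k + 1).
    by case: H => [->|[_ ->]]; [left|right].
  split; first lia.
  apply/idP/idP; [move/eqP|move=> Hle; apply/eqP]; lia.
have H' : ((A s p k + h s k) %/ 2)%Z = y k by case: H => [//|[]]; rewrite (negbTE Mk).
lia.
Qed.

Definition dirrel (p q : T) j :=
  if M j then (if up p j then is_true (A s p j <= A s q j <= A s p j + 1)
               else is_true (A s p j - 1 <= A s q j <= A s p j))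
  else A s q j = A s p j.

Lemma step p k : inS p -> Bad p -> M k ->
  exists q, [/\ inS q, forall j, dirrel p q j &
     (if up p k then A 0 p k < A 0 q k else A 0 q k < A 0 p k)].
Proof.
move=> Sp [t [ts [_ Hact]]] Mk.
have pP : p \in P by case/andP: Sp.
have [[q1 q1P [inq1 eq1]] [q2 q2P [inq2 eq2]]] := Hact k Mk.
pose q := if up p k then q2 else q1.
have qP : q \in P by rewrite /q; case: (up p k).
have inq : inF (Fx t p M (up p)) M (A t q) by rewrite /q; case: (up p k).
have eqk : A t q k = A t p k + (if up p k then 1 else -1).
  rewrite /q; move: eq1 eq2; rewrite /Fx Mk /=; case: (up p k) => //= _ _ ; lia.
have sE : s = ((s - t) + t)%N by rewrite subnK.
have dr : forall j, dirrel p q j.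
  move=> j; rewrite /dirrel; move/inFP: inq => /(_ j); rewrite /Fx.
  case Mj: (M j) => /=; case: (up p j) => /= Hj.
  - have : 0 <= A t q j - A t p j <= 1 by case: Hj => [->|[_ ->]]; [exact: L01a|exact: L01b].
    by move/(Aprop01 (s - t) pP qP); rewrite -sE => /conv01.
  - have : -1 <= A t q j - A t p j <= 0 by case: Hj => [->|[_ ->]]; [exact: L10a|exact: L10b].
    by move/(Aprop10 (s - t) pP qP); rewrite -sE => /conv10.
  - have : A t q j = A t p j by case: Hj => [->|[]].
    by move/(Aprop0 (s - t) pP qP); rewrite -sE.
  - have : A t q j = A t p j by case: Hj => [->|[]].
    by move/(Aprop0 (s - t) pP qP); rewrite -sE.
exists q; split => //.
- apply/andP; split => //; apply/forallP => j.
  have [Hr1 Hr2] := inS_range j Sp; have := dr j; rewrite /dirrel Astep // /gz.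
  move: Hr1 Hr2; rewrite /a; case Mj: (M j) => /= Hr1 Hr2.
    have [H1 H2] := Hr1 isT; move=> Hd; apply: fib_or; exact: step_arith H1 H2 Hd.
  move=> ->; apply/orP; left; apply/eqP; apply: divz_lo; exact: Hr2 isT.
- case U: (up p k); move: eqk; rewrite U => eqk.
    by case: (lerP (A 0 q k) (A 0 p k)) => // /(Amono t pP qP); rewrite eqk no_succ_le.
  by case: (lerP (A 0 p k) (A 0 q k)) => // /(Amono t qP pP); rewrite eqk no_pred_ge.
Qed.

Definition mu k p := count (fun r => if up p k then A 0 p k < A 0 r k else A 0 r k < A 0 p k) P.

Lemma mu_lt p q k : q \in P -> up q k = up p k ->
  (if up p k then A 0 p k < A 0 q k else A 0 q k < A 0 p k) -> (mu k q < mu k p)%N.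
Proof.
move=> qP Uq H; apply: (count_lt (x := q)) => //.
all: try (move=> r; rewrite Uq; move: H; case: (up p k) => H Hr; lia).
all: by rewrite Uq; case: (up p k); rewrite ltxx.
Qed.

Lemma inner_pres p q l : inS p -> dirrel p q l -> M l -> inner p l -> inner q l.
Proof.
move=> Sp Hd Ml Ip; have [Hr _] := inS_range l Sp; move: Hd Ip; rewrite /dirrel /inner Ml.
have [H1 H2] := Hr Ml; rewrite H2.
case: ifP => Hc Hd /orP[] /eqP E; apply/orP;
  (case: (lerP (A s q l) (a l + 1)) => Hq; [left|right]); apply/eqP; lia.
Qed.

Lemma reach k : M k -> (forall p, inS p -> Bad p) -> forall p, inS p ->
  exists q, [/\ inS q, inner q k & forall l, M l -> inner p l -> inner q l].
Proof.
move=> Mk allbad p Sp; move: {2}(mu k p) (leqnn (mu k p)) => n.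
elim: n p Sp => [|n IH] p Sp Hle.
all: case Ip: (inner p k); first by exists p; split.
all: have [q [Sq dr H0]] := step Sp (allbad p Sp) Mk.
all: case Iq: (inner q k); first by exists q; split => // l Ml; apply: inner_pres.
all: have qP : q \in P by case/andP: Sq.
all: have [Hrp _] := inS_range k Sp; have [Hrq _] := inS_range k Sq.
all: have [Hp1 Up] := Hrp Mk; have [Hq1 Uq] := Hrq Mk.
all: have dk := dr k; rewrite /dirrel Mk Up in dk.
all: move: Ip Iq; rewrite /inner => Ip Iq.
all: have Usame : up q k = up p k by rewrite Uq Up; case: ifP dk => Hc dk;
       apply/idP/idP; move: Ip Iq; case: eqP; case: eqP; case: eqP; case: eqP => //=; lia.
all: have Hlt := mu_lt qP Usame H0.
  by move: Hle; rewrite leqn0 => /eqP Hm; rewrite Hm in Hlt.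
have Hq : (mu k q <= n)%N by rewrite -ltnS; exact: leq_trans Hlt Hle.
have [q' [Sq' Iq' Pq']] := IH q Sq Hq.
exists q'; split => // l Ml Il; apply: Pq' => //; exact: inner_pres (dr l) Ml Il.
Qed.

Lemma nout_lt p q l : M l -> ~~ inner p l -> inner q l ->
  (forall l, M l -> inner p l -> inner q l) ->
  (#|[pred l | M l && ~~ inner q l]| < #|[pred l | M l && ~~ inner p l]|)%N.
Proof.
move=> Ml Il Iq Pq; apply: proper_card; apply/properP; split.
  apply/fintype.subsetP => l'; rewrite !inE => /andP [Ml' Il']; rewrite Ml' /=.
  by apply: contra Il' => Il'; exact: Pq.
by exists l; rewrite !inE ?Ml ?Il ?Iq.
Qed.

Lemma allin_ex : (forall p, inS p -> Bad p) -> forall p, inS p -> exists q, inS q /\ allin q.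
Proof.
move=> allbad p Sp; pose nout p := #|[pred l | M l && ~~ inner p l]|.
move: {2}(nout p) (leqnn (nout p)) => n; elim: n p Sp => [|n IH] p Sp Hle.
all: case: (boolP (allin p)) => Ha; first by exists p.
all: move: Ha; rewrite /allin negb_forall => /existsP [l]; rewrite negb_imply => /andP [Ml Il].
all: have [q [Sq Iq Pq]] := reach Ml allbad Sp.
all: have Hlt : (nout q < nout p)%N by exact: nout_lt Ml Il Iq Pq.
  by move: Hle; rewrite leqn0 => /eqP Hm; rewrite Hm in Hlt.
have Hq : (nout q <= n)%N by rewrite -ltnS; exact: leq_trans Hlt Hle.
exact: IH q Sq Hq.
Qed.

Lemma cross k : M k -> (forall p, inS p -> Bad p) -> forall p, inS p -> allin p ->
  exists q, [/\ inS q, allin q & up q k = ~~ up p k].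
Proof.
move=> Mk allbad p Sp Ap; move: {2}(mu k p) (leqnn (mu k p)) => n.
elim: n p Sp Ap => [|n IH] p Sp Ap Hle.
all: have [q [Sq dr H0]] := step Sp (allbad p Sp) Mk.
all: have qP : q \in P by case/andP: Sq.
all: have Aq : allin q by apply/forallP => l; apply/implyP => Ml;
       apply: (inner_pres Sp (dr l) Ml); move/forallP: Ap => /(_ l) /implyP; apply.
all: have Ipk : inner p k by move/forallP: Ap => /(_ k) /implyP; apply.
all: have [Hrp _] := inS_range k Sp; have [Hrq _] := inS_range k Sq.
all: have [Hp1 Up] := Hrp Mk; have [Hq1 Uq] := Hrq Mk.
all: have dk := dr k; rewrite /dirrel Mk Up in dk.
all: move: Ipk; rewrite /inner => Ipk.
all: case: (boolP (up q k == ~~ up p k)) => Hx; first by exists q; split => //; move/eqP: Hx.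
all: have Usame : up q k = up p k by move: Hx; case: (up q k); case: (up p k).
all: have Hlt := mu_lt qP Usame H0.
  by move: Hle; rewrite leqn0 => /eqP Hm; rewrite Hm in Hlt.
have Hq : (mu k q <= n)%N by rewrite -ltnS; exact: leq_trans Hlt Hle.
have [q' [Sq' Aq' Uq']] := IH q Sq Aq Hq.
by exists q'; split => //; rewrite Uq' Usame.
Qed.

Lemma core_good : Active s.+1 y M ->
  ~ (exists x0 m0, Active s x0 m0 /\ ImgRel s x0 m0 y M) ->
  exists p, inS p /\ forall t, (t <= s)%N -> ~ Active t (Fx t p M (up p)) M.
Proof.
move=> [[p0 p0P inp0] _] Hno; apply: contrapT => Hn.
have allbad : forall p, inS p -> Bad p.
  move=> p Sp; apply: contrapT => nb; apply: Hn; exists p; split => // t ts Ha.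
  by apply: nb; exists t.
have S0 : inS p0 by apply/andP.
have [r0 [Sr0 Ar0]] := allin_ex allbad S0.
pose R := [seq r <- P | inS r && allin r].
have r0R : r0 \in R by rewrite mem_filter Sr0 Ar0 andbT; case/andP: Sr0.
have RP : forall r, r \in R -> [/\ r \in P, inS r & allin r].
  by move=> r; rewrite mem_filter => /andP [/andP [Sr Ar] rP].
pose hasv j v := has (fun r => A s r j == v) R.
pose x0 := fun j => if M j then a j + 1 else if hasv j (a j) then a j else a j + 1.
pose m0 := [ffun j => M j || (hasv j (a j) && hasv j (a j + 1))].
have Rin : forall r, r \in R -> inF x0 m0 (A s r).
  move=> r rR; have [rP Sr Ar] := RP r rR; apply/forallP => j; rewrite /x0 /m0 ffunE.
  have [Hr1 Hr2] := inS_range j Sr.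
  case Mj: (M j) => /=.
    move/forallP: Ar => /(_ j) /implyP /(_ Mj); rewrite /inner => /orP [] /eqP ->;
    [by rewrite eqxx | by rewrite twoE eqxx orbT].
  have Hb := Hr2 (negbT Mj).
  case Ha: (hasv j (a j)).
    case: (boolP (A s r j == a j)) => //= Hne.
    have Ev : A s r j = a j + 1 by exact: ev_arith Hb Hne.
    have -> : hasv j (a j + 1) by apply/hasP; exists r => //; rewrite Ev.
    by rewrite Ev eqxx.
  have Ev : A s r j = a j + 1.
    case: (boolP (A s r j == a j)) => [E|Hne]; last exact: ev_arith Hb Hne.
    by move: Ha; rewrite /hasv => /negbT /hasPn /(_ r rR); rewrite E.
  by rewrite Ev eqxx.
have valk : forall r k, inS r -> allin r -> M k ->
    A s r k = if up r k then a k + 1 else a k + 2.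
  move=> r k Sr Ar Mk; have [Hr1 _] := inS_range k Sr; have [_ Hu] := Hr1 Mk.
  move/forallP: Ar => /(_ k) /implyP /(_ Mk); rewrite /inner; exact: valk_arith.
have inRP : forall q, inS q -> allin q -> q \in R.
  by move=> q Sq Aq; rewrite mem_filter Sq Aq; case/andP: Sq.
apply: Hno; exists x0, m0; split.
  split; first by exists r0; [case/andP: Sr0|exact: Rin].
  move=> k; rewrite /m0 ffunE; case Mk: (M k) => /= Hk.
    have [q [Sq Aq Uq]] := cross Mk allbad Sr0 Ar0.
    have qR := inRP q Sq Aq.
    have qP : q \in P by case/andP: Sq.
    have r0P : r0 \in P by case/andP: Sr0.
    have Vq := valk q k Sq Aq Mk; have V0 := valk r0 k Sr0 Ar0 Mk.
    rewrite /x0 Mk; move: Vq; rewrite Uq; case U0: (up r0 k) in V0 * => /= Vq.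
      by split; [exists r0 => //; split; [exact: Rin|]|exists q => //; split; [exact: Rin|rewrite Vq twoE]].
    by split; [exists q => //; split; [exact: Rin|]|exists r0 => //; split; [exact: Rin|rewrite V0 twoE]].
  move/andP: Hk => [/hasP [r1 r1R /eqP E1] /hasP [r2 r2R /eqP E2]].
  have [r1P _ _] := RP r1 r1R; have [r2P _ _] := RP r2 r2R.
  have Hv : hasv k (a k) by apply/hasP; exists r1 => //; apply/eqP.
  rewrite /x0 Mk Hv; split; [exists r1 => //; split; [exact: Rin|]|exists r2 => //; split; [exact: Rin|]] => //.
move=> j; rewrite /m0 /x0 ffunE /gz /a; split => [Mj|Mj]; first rewrite Mj /=.
  by split => //; split; [exact: div_a1|exact: div_a2].
rewrite (negbTE Mj) /=; split; first by case: ifP => _; [exact: div_a0|exact: div_a1].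
by case/andP => -> _; exact: div_a1.
Qed.
End Fixed.
End Core.


Lemma round_q (R : realType) (z w Y tau : int) (e : R) :
  (e = 1 /\ tau = 0) \/ (e = -1 /\ tau = 1) ->
  `|(((z - w)%:~R - e / 2) / 2) - (((z - w + tau) %/ 2)%Z)%:~R| <= 1 / 4 /\
  (`|(((z - w)%:~R - e / 2) / 2) - Y%:~R| <= 1 / 2 <-> Y = ((z - w + tau) %/ 2)%Z).
Proof.
move=> He.
set q := ((z - w + tau) %/ 2)%Z; set r := ((z - w + tau) %% 2)%Z.
have Hzr : z - w + tau = q * 2 + r by rewrite /q /r -divz_eq.
have r01 : r = 0 \/ r = 1.
  have := modz_ge0 (z - w + tau) (isT : (2:int) != 0).
  have := ltz_pmod (z - w + tau) (isT : (0:int) < 2); rewrite -/r; lia.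
have HzR : (z - w)%:~R = (q%:~R * 2 + r%:~R - tau%:~R :> R).
  have -> : z - w = q * 2 + r - tau by rewrite -Hzr addrK.
  by rewrite intrB intrD intrM.
have H1 : `|(((z - w)%:~R - e / 2) / 2) - q%:~R| <= 1 / 4.
  rewrite HzR ler_norml.
  by case: He => [[-> ->]|[-> ->]]; case: r01 => ->; rewrite ?mulr0z ?mulr1z; lra.
split => //; split => [H|->] //; last by apply: le_trans H1 _; lra.
have : `|(q%:~R - Y%:~R : R)| <= 3 / 4.
  move: H H1; rewrite !ler_norml; lra.
rewrite -intrB ler_norml => /andP [Ha Hb].
have Ha' : (-1 : int) < q - Y.
  by rewrite -(ltr_int R); apply: lt_le_trans Ha; rewrite mulrN1z; lra.
have Hb' : q - Y < 1.
  by rewrite -(ltr_int R); apply: le_lt_trans Hb _; rewrite mulr1z; lra.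
lia.
Qed.


Section Conv.
Variables (R : realType) (d : nat).
Notation pt := 'rV[R]_d.

Lemma conv_mono (S T : set pt) : S `<=` T -> conv S `<=` conv T.
Proof. by move=> ST z [k [w [y [H1 H2 H3 H4]]]]; exists k, w, y; split => // i; apply: ST. Qed.

Lemma conv_sing (S : set pt) v : S v -> conv S v.
Proof.
move=> Sv; exists 1%N, (fun _ => 1), (fun _ => v).
by split; [move=> i; exact: ler01| rewrite big_ord1 | by [] | rewrite big_ord1 scale1r].
Qed.

Lemma conv_comb (S : set pt) z1 z2 (t : R) : conv S z1 -> conv S z2 -> 0 <= t <= 1 ->
  conv S ((1 - t) *: z1 + t *: z2).
Proof.
move=> [k1 [w1 [y1 [P1 S1 Y1 E1]]]] [k2 [w2 [y2 [P2 S2 Y2 E2]]]] /andP [t0 t1].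
pose w (i : 'I_(k1 + k2)) := match split i with inl i1 => (1 - t) * w1 i1 | inr i2 => t * w2 i2 end.
pose y (i : 'I_(k1 + k2)) := match split i with inl i1 => y1 i1 | inr i2 => y2 i2 end.
have SL : forall i, split (lshift k2 i) = inl i := fun i => unsplitK (inl _ i).
have SR : forall i, split (rshift k1 i) = inr i := fun i => unsplitK (inr _ i).
exists (k1 + k2)%N, w, y; split.
- move=> i; rewrite /w; case: (split i) => j; apply: mulr_ge0 => //; lra.
- rewrite big_split_ord.
  have -> : \sum_(i < k1) w (lshift k2 i) = (1 - t) * \sum_(i < k1) w1 i.
    by rewrite mulr_sumr; apply: eq_bigr => i _; rewrite /w SL.
  have -> : \sum_(i < k2) w (rshift k1 i) = t * \sum_(i < k2) w2 i.
    by rewrite mulr_sumr; apply: eq_bigr => i _; rewrite /w SR.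
  by rewrite S1 S2 !mulr1 /= subrK.
- by move=> i; rewrite /y; case: (split i).
- rewrite big_split_ord E1 E2 !scaler_sumr; congr (_ + _); apply: eq_bigr => i _.
    by rewrite /w /y SL scalerA.
  by rewrite /w /y SR scalerA.
Qed.

Lemma conv_box (S : set pt) a x m : S `<=` box a x m -> conv S `<=` box a x m.
Proof.
move=> SB z [k [w [y [P1 S1 Y1 ->]]]] j.
have Ez : (\sum_(i < k) w i *: y i) 0 j = \sum_(i < k) w i * y i 0 j.
  by rewrite summxE; apply: eq_bigr => i _; rewrite mxE.
have Ex : forall r : R, r = \sum_(i < k) w i * r by move=> r; rewrite -mulr_suml S1 mul1r.
rewrite Ez; case mj: (m j).
  apply/andP; split.
    rewrite {1}(Ex (x 0 j)); apply: ler_sum => i _; apply: ler_wpM2l => //.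
    by have := SB _ (Y1 i) j; rewrite mj => /andP [].
  rewrite {1}(Ex (x 0 j + a)); apply: ler_sum => i _; apply: ler_wpM2l => //.
  by have := SB _ (Y1 i) j; rewrite mj => /andP [].
apply/eqP; rewrite {1}(Ex (x 0 j)); apply: eq_bigr => i _.
by have := SB _ (Y1 i) j; rewrite mj => /eqP ->.
Qed.

Lemma box_conv_aux (a : R) (x : pt) (m : {ffun 'I_d -> bool}) (J : seq 'I_d) (z : pt) :
  0 < a ->
  (forall j, if j \in J then is_true (m j && (x 0 j <= z 0 j <= x 0 j + a))
             else z 0 j = x 0 j \/ (m j /\ z 0 j = x 0 j + a)) ->
  conv (box_vertex a x m) z.
Proof.
move=> a0; elim: J z => [|k J IH] z H.
  apply: conv_sing => j; exact: H j.
have Hk := H k; rewrite inE eqxx /= in Hk; move/andP: Hk => [mk /andP [Hk1 Hk2]].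
pose z0 := \row_j (if j == k then x 0 k else z 0 j).
pose z1 := \row_j (if j == k then x 0 k + a else z 0 j).
pose t := (z 0 k - x 0 k) / a.
have Hz : z = (1 - t) *: z0 + t *: z1.
  apply/rowP => j; rewrite !mxE; case: eqP => [->|_]; last by ring.
  rewrite /t; have an : a != 0 by rewrite gt_eqF.
  by field.
have Hsub : forall (zz : pt), (zz 0 k = x 0 k \/ zz 0 k = x 0 k + a) ->
    (forall j, j != k -> zz 0 j = z 0 j) -> conv (box_vertex a x m) zz.
  move=> zz Hzk Hzj; apply: IH => j.
  case: (boolP (j == k)) => [/eqP ->|jk].
    case: ifP => _; first by case: Hzk => ->; rewrite mk /= ?lexx ?lerDl ?ltW //.
    by case: Hzk => ->; [left|right].
  have := H j; rewrite inE (negbTE jk) /= (Hzj j jk); by case: ifP.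
rewrite Hz; apply: conv_comb.
- apply: Hsub; first by left; rewrite mxE eqxx.
  by move=> j jk; rewrite mxE (negbTE jk).
- apply: Hsub; first by right; rewrite mxE eqxx.
  by move=> j jk; rewrite mxE (negbTE jk).
- rewrite /t; apply/andP; split; first by apply: divr_ge0 => //; lra.
  by rewrite ler_pdivrMr // mul1r; lra.
Qed.

Lemma box_conv (a : R) (x : pt) (m : {ffun 'I_d -> bool}) : 0 < a -> box a x m `<=` conv (box_vertex a x m).
Proof.
move=> a0 z Hz; apply: (@box_conv_aux a x m (enum [pred j | m j])) => // j.
rewrite mem_enum inE; have := Hz j; case: (m j) => //= /eqP ->; by left.
Qed.

End Conv.


Section Real.
Variables (R : realType) (d : nat) (P : seq 'rV[R]_d) (lam : R) (O eps : nat -> 'rV[R]_d).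
Hypothesis lam_gt0 : 0 < lam.
Hypothesis Ogrid : forall s, grid lam O eps s (O s).
Hypothesis epsE : forall s (j : 'I_d), eps s 0 j = 1 \/ eps s 0 j = -1.

Local Notation al := (alpha lam).
Local Notation gridR := (grid lam O eps).

Lemma al_gt0 t : 0 < al t.
Proof. by rewrite /alpha; apply: mulr_gt0 => //; apply: exprn_gt0. Qed.
Lemma al_neq0 t : al t != 0.
Proof. by rewrite gt_eqF // al_gt0. Qed.
Lemma alS t : al t.+1 = 2 * al t.
Proof. by rewrite /alpha exprS mulrCA. Qed.

Fixpoint c t : 'rV[R]_d := match t with 0 => 0 | t'.+1 => O t' + (al t' / 2) *: eps t' end.
Definition u t (x : 'rV[R]_d) j := (x 0 j - c t 0 j) / al t.
Definition rp t (z : 'I_d -> int) : 'rV[R]_d := \row_j (c t 0 j + al t * (z j)%:~R).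
Definition iz t x j := Num.floor (u t x j).

Lemma u_rp t z j : u t (rp t z) j = (z j)%:~R.
Proof. rewrite /u /rp mxE; have := al_neq0 t => Ha; field; exact: Ha. Qed.

Lemma uS t x j : u t.+1 x j = (u t x j - u t (O t) j - eps t 0 j / 2) / 2.
Proof.
rewrite /u /= alS !mxE; have := al_neq0 t => Ha; field; exact: Ha.
Qed.

Lemma grid_char t x : gridR t x <-> forall j, u t x j \is a Num.int.
Proof.
elim: t x => [|t IH] x.
  split.
    move=> [z ->] j; have -> : u 0 (\row_j0 (lam * (z j0)%:~R)) j = (z j)%:~R.
      rewrite /u /alpha /= !mxE expr0 mulr1; have Hl : lam != 0 by rewrite gt_eqF.
      field; exact: Hl.
    exact: intr_int.
  move=> H; exists (fun j => Num.floor (u 0 x j)); apply/rowP => j; rewrite mxE floorK //.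
  rewrite /u /alpha /= !mxE expr0 mulr1; have Hl : lam != 0 by rewrite gt_eqF.
  field; exact: Hl.
split.
  move=> [y /IH Hy <-] j; rewrite uS.
  have -> : (u t (2 *: (y - O t) + O t + (al t / 2) *: eps t) j - u t (O t) j - eps t 0 j / 2) / 2
        = u t y j - u t (O t) j.
    rewrite /u !mxE; have := al_neq0 t => Ha; field; exact: Ha.
  apply: rpredB => //; exact: (IH _).1 (Ogrid t) j.
move=> H; exists ((2 : R)^-1 *: (x - O t - (al t / 2) *: eps t) + O t).
  apply/IH => j.
  have -> : u t (2^-1 *: (x - O t - (al t / 2) *: eps t) + O t) j = u t.+1 x j + u t (O t) j.
    rewrite uS /u !mxE; have := al_neq0 t => Ha; field; exact: Ha.
  apply: rpredD => //; exact: (IH _).1 (Ogrid t) j.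
apply/rowP => j; rewrite !mxE; by field.
Qed.

Lemma grid_rp t z : gridR t (rp t z).
Proof. by apply/grid_char => j; rewrite u_rp intr_int. Qed.

Lemma rp_iz t x : gridR t x -> x = rp t (iz t x).
Proof.
move/grid_char => H; apply/rowP => j; rewrite /rp /iz mxE floorK // /u.
by rewrite mulrC mulfVK ?al_neq0 // addrC subrK.
Qed.

Lemma iz_rp t z j : iz t (rp t z) j = z j.
Proof. by rewrite /iz u_rp intrKfloor. Qed.


Definition hh t j : int := - iz t (O t) j + (if eps t 0 j == 1 then 0 else 1).
Definition Av t (p : 'rV[R]_d) j : int := Num.floor (u t p j + 2^-1).

Lemma Av_near t p j : `|u t p j - (Av t p j)%:~R| <= 1/2.
Proof.
have := floor_itv (u t p j + 2^-1); rewrite -/(Av t p j) intrD => /andP [H1 H2].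
rewrite ler_norml; apply/andP; split; lra.
Qed.

Lemma vor_char t y p : vor lam t y p <-> forall j, `|u t p j - u t y j| <= 1/2.
Proof.
have Ha := al_gt0 t.
have E : forall j, u t p j - u t y j = (p 0 j - y 0 j) / al t.
  move=> j; rewrite /u; have := al_neq0 t => Hn; field; exact: Hn.
split => H j; have := H j; rewrite ?E.
  by rewrite normrM normfV (gtr0_norm Ha) ler_pdivrMr // mulrC mul1r.
by rewrite normrM normfV (gtr0_norm Ha) ler_pdivrMr // mulrC mul1r.
Qed.

Hypothesis uniqV : forall s p, p \in P -> exists! y, gridR s y /\ vor lam s y p.

Lemma A_vor t p : vor lam t (rp t (Av t p)) p.
Proof. by apply/vor_char => j; rewrite u_rp; exact: Av_near. Qed.

Lemma A_unique t p z : p \in P -> (forall j, `|u t p j - (z j)%:~R| <= 1/2) ->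
  forall j, z j = Av t p j.
Proof.
move=> pP H j; have [y [_ Hu]] := uniqV t pP.
have Vz : vor lam t (rp t z) p by apply/vor_char => j'; rewrite u_rp; exact: H.
have E1 := Hu _ (conj (grid_rp t z) Vz).
have E2 := Hu _ (conj (grid_rp t (Av t p)) (A_vor t p)).
by rewrite -(iz_rp t z j) -(iz_rp t (Av t p) j) -E1 -E2.
Qed.

Lemma eps_case t j : (eps t 0 j = 1 /\ (if eps t 0 j == 1 then 0 else 1 : int) = 0) \/
                     (eps t 0 j = -1 /\ (if eps t 0 j == 1 then 0 else 1 : int) = 1).
Proof.
case: (epsE t j) => ->; [left|right]; rewrite ?eqxx //; split => //.
by have -> : ((-1 : R) == 1) = false by apply/eqP; lra.
Qed.

Lemma uO t j : u t (O t) j = (iz t (O t) j)%:~R.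
Proof. by rewrite /iz floorK //; exact: (grid_char t (O t)).1 (Ogrid t) j. Qed.

Lemma Astep_real t p j : p \in P -> Av t.+1 p j = gz hh t j (Av t p j).
Proof.
move=> pP; symmetry; apply: (A_unique (z := fun j => gz hh t j (Av t p j))) => // {}j.
have Hgz : gz hh t j (Av t p j) = divz (Av t p j - iz t (O t) j + (if eps t 0 j == 1 then 0 else 1)) 2.
  by rewrite /gz /hh addrA.
rewrite Hgz uS uO.
have [H1 _] := round_q (Av t p j) (iz t (O t) j) 0 (eps_case t j).
have H2 := Av_near t p j.
move: H1 H2; rewrite !ler_norml intrB.
set q := (_ %/ 2)%Z; lra.
Qed.

Lemma gpt_char s zv Y : gridR s.+1 Y ->
  (vor lam s.+1 Y (rp s zv) <-> forall j, iz s.+1 Y j = gz hh s j (zv j)).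
Proof.
move=> GY; rewrite vor_char; have EY := rp_iz GY.
have Hu : forall j, u s.+1 (rp s zv) j = ((zv j - iz s (O s) j)%:~R - eps s 0 j / 2) / 2.
  by move=> j; rewrite uS u_rp uO intrB.
have Hg : forall j, gz hh s j (zv j) = divz (zv j - iz s (O s) j + (if eps s 0 j == 1 then 0 else 1)) 2.
  by move=> j; rewrite /gz /hh addrA.
have HuY : forall j, u s.+1 Y j = (iz s.+1 Y j)%:~R.
  by move=> j; rewrite /iz floorK //; exact: (grid_char s.+1 Y).1 GY j.
split => H j; have [_ Hr] := round_q (zv j) (iz s (O s) j) (iz s.+1 Y j) (eps_case s j).
  by rewrite Hg; apply/Hr; have := H j; rewrite Hu HuY.
by rewrite Hu HuY; apply/Hr; rewrite -Hg.
Qed.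

Lemma v_u t (v : 'rV[R]_d) j : v 0 j = c t 0 j + al t * u t v j.
Proof. rewrite /u; have := al_neq0 t => Ha; field; exact: Ha. Qed.

Lemma aux_ineq (cc a zz uu : R) : 0 < a ->
  (cc + a * zz <= cc + a * uu <= cc + a * zz + a) = (zz <= uu <= zz + 1).
Proof.
move=> Ha; have -> : cc + a * zz + a = cc + a * (zz + 1) by rewrite mulrDr mulr1 addrA.
by rewrite !lerD2l !ler_pM2l.
Qed.

Lemma face_u t z (m : {ffun 'I_d -> bool}) v : face lam t (rp t z) m v <->
  forall j, if m j then is_true ((z j)%:~R <= u t v j <= (z j)%:~R + 1) else u t v j = (z j)%:~R.
Proof.
have Ha := al_gt0 t.
have E : forall j, (rp t z) 0 j = c t 0 j + al t * (z j)%:~R by move=> j; rewrite mxE.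
split => H j; have := H j; rewrite /face /box.
  rewrite E (v_u t v j); case: (m j); first by rewrite aux_ineq.
  by move/eqP/addrI/mulfI => -> //; rewrite al_neq0.
rewrite E (v_u t v j); case: (m j); first by rewrite aux_ineq.
by move=> ->.
Qed.

Lemma face_grid t z m zv : face lam t (rp t z) m (rp t zv) <-> inF z m zv.
Proof.
rewrite face_u; split => H.
  apply/forallP => j; have := H j; rewrite u_rp; case: (m j) => /=.
    rewrite -(intrD _ _ 1) !ler_int => Hj; apply/orP.
    by case: (lerP (zv j) (z j)) => Hc; [left|right]; apply/eqP; lia.
  by move/intr_inj => ->; rewrite eqxx.
move=> j; move/forallP: H => /(_ j); rewrite u_rp; case: (m j) => /=.
  by rewrite -(intrD _ _ 1) !ler_int => /orP [] /eqP ->; lia.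
by rewrite orbF => /eqP ->.
Qed.

Lemma active_vtx_char t y : active_vtx P lam O eps t y <-> exists2 p, p \in P & y = rp t (Av t p).
Proof.
split.
  move=> [gy [p pP vp]]; exists p => //; have [y0 [_ Hu]] := uniqV t pP.
  by rewrite -(Hu _ (conj gy vp)) -(Hu _ (conj (grid_rp t (Av t p)) (A_vor t p))).
by move=> [p pP ->]; split; [exact: grid_rp|exists p => //; exact: A_vor].
Qed.

Lemma inF_refl z (m : {ffun 'I_d -> bool}) : inF z m z.
Proof. by apply/forallP => j; rewrite eqxx. Qed.

Lemma facet_card (m : {ffun 'I_d -> bool}) k : m k ->
  (face_dim [ffun j => m j && (j != k)]).+1 = face_dim m.
Proof.
move=> mk; rewrite /face_dim (cardD1 k [pred j | m j]) inE mk add1n; congr _.+1.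
by apply: eq_card => j; rewrite !inE ffunE andbC.
Qed.

Lemma facet_lo t z (m : {ffun 'I_d -> bool}) k : m k ->
  is_facet lam O eps t (rp t z) [ffun j => m j && (j != k)] (rp t z) m.
Proof.
move=> mk; split; [exact: grid_rp| |exact: facet_card].
move=> v /face_u H; apply/face_u => j; have := H j; rewrite ffunE.
case: (boolP (j == k)) => [/eqP ->|jk]; rewrite ?andbF ?andbT //= mk => ->.
by rewrite lexx /= lerDl ler01.
Qed.

Lemma facet_hi t z (m : {ffun 'I_d -> bool}) k : m k ->
  is_facet lam O eps t (rp t (fun j => if j == k then z j + 1 else z j))
     [ffun j => m j && (j != k)] (rp t z) m.
Proof.
move=> mk; split; [exact: grid_rp| |exact: facet_card].
move=> v /face_u H; apply/face_u => j; have := H j; rewrite ffunE.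
case: (boolP (j == k)) => [/eqP ->|jk].
  by rewrite /= andbF mk => ->; rewrite intrD lexx andbT lerDl ler01.
by rewrite /= andbT.
Qed.

Lemma active_bridge t z m : active P lam O eps t (rp t z) m <-> Active P Av t z m.
Proof.
split.
  move=> [_ [[y [/active_vtx_char [p pP ->] /face_grid Hin]] Hf]]; split; first by exists p.
  move=> k mk; split; apply: contrapT => Hn.
    apply: (Hf _ _ (@facet_hi t z m k mk)) => y1 /active_vtx_char [q qP ->] /face_grid Hq.
    apply/face_grid/forallP => j; rewrite ffunE; move/forallP: (Hq) => /(_ j).
    case: (boolP (j == k)) => [/eqP ->|jk] /=; rewrite ?eqxx ?andbF ?andbT /=.
      case/orP => [/eqP E|/andP [_ /eqP E]]; last by rewrite E eqxx.
      by exfalso; apply: Hn; exists q.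
    by [].
  apply: (Hf _ _ (@facet_lo t z m k mk)) => y1 /active_vtx_char [q qP ->] /face_grid Hq.
  apply/face_grid/forallP => j; rewrite ffunE; move/forallP: (Hq) => /(_ j).
  case: (boolP (j == k)) => [/eqP ->|jk] /=; rewrite ?andbF ?andbT /=.
    case/orP => [/eqP E|/andP [_ /eqP E]]; first by rewrite E eqxx.
    by exfalso; apply: Hn; exists q.
  by [].
move=> [[p pP Hp] Hk]; split; first exact: grid_rp.
split; first by exists (rp t (Av t p)); split; [apply/active_vtx_char; exists p|apply/face_grid].
move=> x' m' [gx' Hsub Hdim] Hall.
set z'' := iz t x'; have Ex' : x' = rp t z'' by exact: rp_iz.
have corner : inF z m z''.
  by apply/face_grid; apply: Hsub; rewrite Ex'; apply/face_grid; exact: inF_refl.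
have mm : forall j, m' j -> m j.
  move=> j mj; apply: contrapT => /negP nmj.
  have : inF z m (fun i => if i == j then z'' i + 1 else z'' i).
    apply/face_grid; apply: Hsub; rewrite Ex'; apply/face_grid/forallP => i.
    by case: (boolP (i == j)) => [/eqP ->|ij]; rewrite ?eqxx ?mj ?orbT //= (negbTE ij) eqxx.
  move/forallP => /(_ j); rewrite eqxx (negbTE nmj) orbF => /eqP E.
  move/forallP: corner => /(_ j); rewrite (negbTE nmj) orbF => /eqP; lia.
have [k mk nk] : exists2 k, m k & ~~ m' k.
  apply: contrapT => Hn.
  have Hs : [pred j | m j] \subset [pred j | m' j].
    apply/fintype.subsetP => j; rewrite !inE => mj; apply: contrapT => /negP nj.
    by apply: Hn; exists j.
  by have := subset_leq_card Hs; rewrite -/(face_dim m) -/(face_dim m') -Hdim ltnn.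
have [[p1 p1P [H1 E1]] [p2 p2P [H2 E2]]] := Hk k mk.
have F1 := Hall _ (proj2 (active_vtx_char t _) (ex_intro2 _ _ p1 p1P erefl)) (proj2 (face_grid _ _ _ _) H1).
have F2 := Hall _ (proj2 (active_vtx_char t _) (ex_intro2 _ _ p2 p2P erefl)) (proj2 (face_grid _ _ _ _) H2).
move: F1 F2; rewrite Ex' => /face_grid /forallP /(_ k) + /face_grid /forallP /(_ k).
rewrite (negbTE nk) !orbF => /eqP A1 /eqP A2; move: E1 E2; rewrite A1 A2 => ->; lia.
Qed.

Lemma rp_vertex s x0 (m0 : {ffun 'I_d -> bool}) zv :
  (forall j, zv j = x0 j \/ (m0 j /\ zv j = x0 j + 1)) ->
  box_vertex (al s) (rp s x0) m0 (rp s zv).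
Proof.
move=> H j; rewrite !mxE; case: (H j) => [->|[mj ->]]; [left|right] => //.
by split => //; rewrite intrD mulrDr mulr1 addrA.
Qed.

Lemma vertex_rp s x0 (m0 : {ffun 'I_d -> bool}) v : box_vertex (al s) (rp s x0) m0 v ->
  exists zv, v = rp s zv /\ forall j, zv j = x0 j \/ (m0 j /\ zv j = x0 j + 1).
Proof.
move=> H; exists (fun j => if v 0 j == rp s x0 0 j then x0 j else x0 j + 1); split.
  apply/rowP => j; rewrite [RHS]mxE; case: (H j) => [E|[_ E]]; rewrite E.
    by rewrite eqxx mxE.
  case: eqP => [/eqP|_]; last by rewrite !mxE intrD mulrDr mulr1 addrA.
  by rewrite -subr_eq0 addrAC subrr add0r gt_eqF // al_gt0.
move=> j; case: (H j) => [E|[mj E]]; rewrite E; first by rewrite eqxx; left.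
case: eqP => [/eqP|_]; last by right.
by rewrite -subr_eq0 addrAC subrr add0r gt_eqF // al_gt0.
Qed.

Lemma gface_bridge s x0 m0 y M : ImgRel hh s x0 m0 y M ->
  face lam s.+1 (rp s.+1 y) M = gface lam O eps s (rp s x0) m0.
Proof.
move=> HI.
set Img := [set Y | exists v, box_vertex (al s) (rp s x0) m0 v /\ gpt lam O eps s v Y].
have I1 : Img `<=` face lam s.+1 (rp s.+1 y) M.
  move=> Y [v [/vertex_rp [zv [-> Hzv]] [gY vY]]].
  rewrite (rp_iz gY); apply/face_grid/forallP => j.
  have := (gpt_char zv gY).1 vY j => ->; have [HM HnM] := HI j.
  case Mj: (M j) => /=.
    have [m0j [E1 E2]] := HM Mj.
    by case: (Hzv j) => [->|[_ ->]]; rewrite ?E1 ?E2 eqxx ?orbT.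
  have [E1 E2] := HnM (negbT Mj); case: (Hzv j) => [->|[m0j ->]].
    by rewrite E1 eqxx.
  by rewrite (E2 m0j) eqxx.
have I2 : box_vertex (al s.+1) (rp s.+1 y) M `<=` Img.
  move=> W HW.
  have [zW [EW HzW]] := vertex_rp HW.
  pose zv j := if zW j == y j then x0 j else x0 j + 1.
  exists (rp s zv); split.
    apply: rp_vertex => j; rewrite /zv; case: ifP => Hc; first by left.
    case: (HzW j) => [E|[Mj _]]; last by right; split => //; have [HM _] := HI j; case: (HM Mj).
    by move: Hc; rewrite E eqxx.
  split; first by rewrite EW; exact: grid_rp.
  rewrite EW; apply/(gpt_char zv (grid_rp s.+1 zW)) => j; rewrite iz_rp /zv; have [HM HnM] := HI j.
  case: (HzW j) => [->|[Mj ->]]; rewrite ?eqxx.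
    by case: (boolP (M j)) => Mj; [have [_ [-> _]] := HM Mj|have [-> _] := HnM Mj].
  have -> : (y j + 1 == y j) = false by apply/negbTE; rewrite -subr_eq0 addrAC subrr add0r oner_eq0.
  by have [_ [_ ->]] := HM Mj.
rewrite eqEsubset; split.
  apply: subset_trans (box_conv (al_gt0 s.+1)) _; exact: conv_mono.
exact: conv_box.
Qed.

Definition o0 : 'I_3 := @Ordinal 3 0 isT.
Definition o1 : 'I_3 := @Ordinal 3 1 isT.
Definition o2 : 'I_3 := @Ordinal 3 2 isT.
Definition mc (c : {ffun 'I_d -> 'I_3}) : {ffun 'I_d -> bool} := [ffun j => c j != o1].
Definition upc (c : {ffun 'I_d -> 'I_3}) (j : 'I_d) : bool := c j == o2.
Definition cd (m : {ffun 'I_d -> bool}) (U : 'I_d -> bool) : {ffun 'I_d -> 'I_3} :=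
  [ffun j => if m j then (if U j then o2 else o0) else o1].

Definition Rel (e : nat * 'rV[R]_d * {ffun 'I_d -> bool}) (k : 'I_(size P) * {ffun 'I_d -> 'I_3}) :=
  let p := nth 0 P k.1 in let c := k.2 in
  [/\ e.2 = mc c, e.1.2 = rp e.1.1 (Fx Av e.1.1 p (mc c) (upc c)),
      Active P Av e.1.1 (Fx Av e.1.1 p (mc c) (upc c)) (mc c) &
      forall t, (t < e.1.1)%N -> ~ Active P Av t (Fx Av t p (mc c) (upc c)) (mc c)].

Lemma Rel_inj e1 e2 k : Rel e1 k -> Rel e2 k -> e1 = e2.
Proof.
case: e1 => [[s1 x1] m1]; case: e2 => [[s2 x2] m2]; rewrite /Rel /= => [[E1 X1 A1 N1] [E2 X2 A2 N2]].
have Es : s1 = s2.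
  case: (ltngtP s1 s2) => // H; [by case: (N2 _ H)|by case: (N1 _ H)].
by subst s2; rewrite E1 E2 X1 X2.
Qed.

Lemma mc_cd m U : mc (cd m U) = m.
Proof. by apply/ffunP => j; rewrite !ffunE; case: (m j) => //; case: (U j). Qed.

Lemma Fx_cd t p m U : Fx Av t p (mc (cd m U)) (upc (cd m U)) = Fx Av t p m U.
Proof.
rewrite mc_cd; apply: funext => j; rewrite /Fx /upc ffunE.
by case: (m j) => //=; case: (U j).
Qed.

Lemma Fx_self s p z m : inF z m (Av s p) -> Fx Av s p m (fun j => Av s p j == z j) = z.
Proof.
move/forallP => H; apply: funext => j; rewrite /Fx; have := H j.
case/orP => [/eqP ->|/andP [-> /eqP ->]]; first by rewrite eqxx andbF.
have -> : (z j + 1 == z j) = false by apply/negbTE; rewrite -subr_eq0 addrAC subrr add0r oner_eq0.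
by rewrite /= addrK.
Qed.

Lemma good_p s x m : no_preimage P lam O eps s x m ->
  exists p, [/\ p \in P, inF (iz s x) m (Av s p) &
    forall t, (t < s)%N -> ~ Active P Av t (Fx Av t p m (fun j => Av s p j == iz s x j)) m].
Proof.
case: s => [|s'] NP.
  have Hact : active P lam O eps 0 x m := NP.
  have gx : gridR 0 x by case: Hact.
  have HA : Active P Av 0 (iz 0 x) m by apply/active_bridge; rewrite -rp_iz.
  by case: HA => [[p pP Hp] _]; exists p; split.
have Hact : active P lam O eps s'.+1 x m := NP.1.
have gx : gridR s'.+1 x by case: Hact.
have HA : Active P Av s'.+1 (iz s'.+1 x) m by apply/active_bridge; rewrite -rp_iz.
have Astep' : forall t p j, p \in P -> Av t.+1 p j = gz hh t j (Av t p j).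
  by move=> t p j pP; exact: Astep_real.
have Hno : ~ (exists x0 m0, Active P Av s' x0 m0 /\ ImgRel hh s' x0 m0 (iz s'.+1 x) m).
  move=> [x0 [m0 [H1 H2]]]; apply: NP.2; exists (rp s' x0), m0; split.
    exact/active_bridge.
  by rewrite {1}(rp_iz gx); exact: gface_bridge.
have [p [/andP [pP Hp] Hg]] := core_good Astep' HA Hno.
by exists p; split.
Qed.

Lemma exists_code e : no_preimage P lam O eps e.1.1 e.1.2 e.2 -> exists k, Rel e k.
Proof.
case: e => [[s x] m] /= NP.
have Hact : active P lam O eps s x m by case: s NP => [|s'] // [].
have gx : gridR s x by case: Hact.
have [p [pP inp good]] := good_p NP.
have iP : (index p P < size P)%N by rewrite index_mem.
exists (Ordinal iP, cd m (fun j => Av s p j == iz s x j)); rewrite /Rel /= nth_index //.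
split.
- by rewrite mc_cd.
- by rewrite Fx_cd Fx_self //; exact: rp_iz.
- by rewrite Fx_cd mc_cd Fx_self //; apply/active_bridge; rewrite -rp_iz.
by move=> t ts; rewrite Fx_cd mc_cd; exact: good.
Qed.

Lemma main (L : seq (nat * 'rV[R]_d * {ffun 'I_d -> bool})) : uniq L ->
  (forall t, t \in L -> no_preimage P lam O eps t.1.1 t.1.2 t.2) ->
  (size L <= size P * 3 ^ d)%N.
Proof.
case: L => [//|e0 L'] uL HL; set L := e0 :: L' in uL HL *.
have [k0 _] := exists_code (HL e0 (mem_head _ _)).
have Hex : forall e, exists k, e \in L -> Rel e k.
  move=> e; case: (boolP (e \in L)) => eL; last by exists k0.
  by have [k Hk] := exists_code (HL e eL); exists k.
have [f Hf] := choice Hex.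
have injf : {in L &, injective f}.
  by move=> e1 e2 e1L e2L Ef; apply: (Rel_inj (Hf e1 e1L)); rewrite Ef; exact: Hf.
have uf : uniq (map f L) by rewrite map_inj_in_uniq.
rewrite -(size_map f) -(card_uniqP uf).
apply: leq_trans (max_card _) _.
by rewrite card_prod card_ord card_ffun !card_ord.
Qed.

End Real.

Unset Implicit Arguments.

Theorem lemma13 (R : realType) (d : nat) (P : seq 'rV[R]_d) (cp lam : R)
    (O : nat -> 'rV[R]_d) (eps : nat -> 'rV[R]_d) :
  uniq P ->
  is_CP P cp ->
  lam = cp / (3 * d%:R) ->
  (forall s, grid lam O eps s (O s)) ->
  (forall s (j : 'I_d), eps s 0 j = 1 \/ eps s 0 j = -1) ->
  (forall s p, p \in P -> exists! y, grid lam O eps s y /\ vor lam s y p) ->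
  forall L : seq (nat * 'rV[R]_d * {ffun 'I_d -> bool}),
    uniq L ->
    (forall t, t \in L -> no_preimage P lam O eps t.1.1 t.1.2 t.2) ->
    (size L <= size P * 3 ^ d)%N.
Proof.
move=> _ [[p [q [pP qP pq E]]] _] Hlam HO Heps HU L uL HL.
have [j Hj] : exists j, p 0 j != q 0 j.
  apply: contrapT => H; move/negP: pq; apply; apply/eqP/rowP => i.
  case: (boolP (p 0 i != q 0 i)) => [Hi|]; first by exfalso; apply: H; exists i.
  by move/negPn/eqP.
have cp_gt0 : 0 < cp.
  rewrite -E /edist sqrtr_gt0 (bigD1 j) //=.
  have H1 : 0 < (p 0 j - q 0 j) ^+ 2 by rewrite exprn_even_gt0 //= subr_eq0.
  have H2 : 0 <= \sum_(i < d | i != j) (p 0 i - q 0 i) ^+ 2.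
    by apply: sumr_ge0 => i _; exact: sqr_ge0.
  lra.
have d_gt0 : (0 < d)%N by apply: leq_ltn_trans (ltn_ord j).
have lam_gt0 : 0 < lam.
  rewrite Hlam; apply: divr_gt0 => //; apply: mulr_gt0 => //; by rewrite ltr0n.
exact: (main lam_gt0 HO Heps HU uL HL).
Qed.
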